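(* Let $\mathbf A$ be a t-algebra of type $\tau$ and trace $\mathsf a$, $X$ a set, and $u_1,u_2\in T_\tau(X)$. Then $\alpha(u_1)=\alpha(u_2)$ for every weak homomorphism $\alpha:\mathcal T_\tau(X)\to\mathbf A^{(\mathsf a)}$ if and only if $\beta(u_1)=\beta(u_2)$ for every strong homomorphism $\beta:\mathcal T_\tau(X)\to\mathbf A^{(\mathsf a)}$.
   Context: $\mathbb N=\{1,2,\dots\}$. A thread on a set $A$ is $s=(s_i)_{i\in\mathbb N}\in A^{\mathbb N}$; for a thread $r$ and $a_1,\dots,a_n\in A$, $r[a_1,\dots,a_n]$ is the thread with $i$-th entry $a_i$ for $i\le n$ and $r_i$ for $i>n$. Write $r\equiv_{\mathbb N}s$ iff $\{i:r_i\ne s_i\}$ is finite; $[s]_{\mathbb N}$ is the class of $s$. A trace on $A$ is a nonempty $\mathsf a\subseteq A^{\mathbb N}$ that is a union of $\equiv_{\mathbb N}$-classes. For a set $\tau$ of operation symbols, a t-algebra of type $\tau$ and trace $\mathsf a$ is $\mathbf A=(A,\mathsf a,\sigma^{\mathbf A})_{\sigma\in\tau}$ with $\mathsf a$ a trace on $A$ and each $\sigma^{\mathbf A}:\mathsf a\to A$ an arbitrary map. Clone $\tau$-algebras: algebras $(C,q_n,\mathsf e_i,\sigma)_{n\ge0,i\ge1,\sigma\in\tau}$ ($\mathsf e_i,\sigma$ constants, $q_n$ of arity $n+1$) satisfying (C1) $q_n(\mathsf e_i,x_1,\dots,x_n)=x_i$ ($i\le n$); (C2) $q_n(\mathsf e_j,x_1,\dots,x_n)=\mathsf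 e_j$ ($j>n$); (C3) $q_n(x,\mathsf e_1,\dots,\mathsf e_n)=x$; (C4) $q_n(x,\bar y)=q_k(x,\bar y,\mathsf e_{n+1},\dots,\mathsf e_k)$ ($k>n$); (C5) $q_n(q_n(x,\bar y),\bar z)=q_n(x,q_n(y_1,\bar z),\dots,q_n(y_n,\bar z))$. The full functional clone $\tau$-algebra $\mathbf A^{(\mathsf a)}$ has universe the set $A^{\mathsf a}$ of all maps $\mathsf a\to A$, with $\mathsf e_i(s)=s_i$, $q_n(\varphi,\psi_1,\dots,\psi_n)(s)=\varphi(s[\psi_1(s),\dots,\psi_n(s)])$ and constant $\sigma$ interpreted as $\sigma^{\mathbf A}$; it is a clone $\tau$-algebra. $T_\tau(X)$ ($\tau$-hyperterms over $X$, $X\cap\tau=\emptyset$) is the least set containing $\mathsf e_1,\mathsf e_2,\dots$ and $w(t_1,\dots,t_n,\mathsf e_{n+1},\mathsf e_{n+2},\dots)$ for $w\in\tau\cup X$, $n\ge0$, $t_i\in T_\tau(X)$; it carries the structure of the free clone $\tau$-algebra $\mathcal T_\tau(X)$ over $X$ (each $x\in X$ identified with $x(\mathsf e_1,\mathsf e_2,\dots)$), with $q_n$ acting as simultaneous substitution of the $i$-th argument for $\mathsf e_i$, $i\le n$. A homomorphism of clone $\tau$-algebras $\alpha:\mathcal T_\tau(X)\to\mathbf A^{(\mathsf a)}$ is weak if $\alpha(x)$ is a constant map for every $x\in X$, and strong if $\alpha(x)$ is semiconstant for every $x\in X$, where $\varphi:\mathsf a\to A$ is semiconstant if $r\equiv_{\mathbb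 N}s$ implies $\varphi(r)=\varphi(s)$ for $r,s\in\mathsf a$. *)

(* Defs.v *)
From mathcomp Require Import all_boot.
Set Implicit Arguments. Unset Strict Implicit. Unset Printing Implicit Defensive.

(* Convention: threads are 0-indexed: for s : nat -> A, (s i) is the paper's
   (i+1)-th entry s_{i+1}.  Likewise the projection e_{i+1} is [HE i] / [Te i]. *)

Definition fin_diff (A : Type) (r s : nat -> A) : Prop :=
  exists N, forall i, N <= i -> r i = s i.

Definition is_trace (A : Type) (a : (nat -> A) -> Prop) : Prop :=
  (exists s, a s) /\ (forall r s, fin_diff r s -> a r -> a s).

Definition trc (A : Type) (a : (nat -> A) -> Prop) := {s : nat -> A | a s}.

Definition upd (A : Type) (r : nat -> A) (l : seq A) : nat -> A :=
  fun i => nth (r i) l i.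

Lemma fin_diff_upd (A : Type) (r : nat -> A) l : fin_diff r (upd r l).
Proof. exists (size l) => i Hi; rewrite /upd nth_default //. Qed.

Record tAlgebra (tau : Type) := TAlg {
  tcar : Type;
  ttrace : (nat -> tcar) -> Prop;
  ttrace_ok : is_trace ttrace;
  top : tau -> trc ttrace -> tcar }.
Arguments ttrace {tau} t _.
Arguments ttrace_ok {tau} t.
Arguments top {tau} t _ _.

Lemma upd_in tau (A : tAlgebra tau) (s : trc (ttrace A)) l :
  ttrace A (upd (proj1_sig s) l).
Proof.
case: (ttrace_ok A) => _ H; apply: (H (proj1_sig s)); first exact: fin_diff_upd.
exact: (proj2_sig s).
Qed.

Definition FCar tau (A : tAlgebra tau) := trc (ttrace A) -> tcar A.

Definition Fe tau (A : tAlgebra tau) (i : nat) : FCar A :=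
  fun s => proj1_sig s i.

(* q_n(phi, psi_1, ..., psi_n) with n = size psis *)
Definition Fq tau (A : tAlgebra tau) (phi : FCar A) (psis : seq (FCar A)) : FCar A :=
  fun s => phi (exist _ (upd (proj1_sig s) (map (fun psi => psi s) psis))
                        (upd_in s _)).

Definition semiconstant tau (A : tAlgebra tau) (phi : FCar A) : Prop :=
  forall r s : trc (ttrace A), fin_diff (proj1_sig r) (proj1_sig s) -> phi r = phi s.

(* raw hyperterms: [HApp w [t_1;...;t_n]] is w(t_1,...,t_n,e_{n+1},e_{n+2},...) *)
Inductive hterm (tau X : Type) :=
| HE : nat -> hterm tau X
| HApp : tau + X -> seq (hterm tau X) -> hterm tau X.
Arguments HE {tau X}.

Definition is_E tau X (k : nat) (t : hterm tau X) : bool :=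
  if t is HE j then j == k else false.

(* remove trailing arguments t_k = e_k (working on the reversed list) *)
Fixpoint trimr tau X (r : seq (hterm tau X)) : seq (hterm tau X) :=
  if r is x :: r' then (if is_E (size r') x then trimr r' else r) else [::].

Definition strip tau X (l : seq (hterm tau X)) := rev (trimr (rev l)).

(* normal form: every hyperterm has a unique normal representative *)
Fixpoint norm tau X (t : hterm tau X) : hterm tau X :=
  match t with
  | HE i => HE i
  | HApp w l => HApp w (strip (map (@norm tau X) l))
  end.

Fixpoint subst tau X (l : seq (hterm tau X)) (t : hterm tau X) : hterm tau X :=
  match t with
  | HE i => nth (HE i) l i
  | HApp w args => HApp w (map (subst l) args ++ drop (size args) l)
  end.

(** The universe T_tau(X) of the free clone tau-algebra: normal hyperterms. *)
Definition hyperterm tau X := {t : hterm tau X | exists u, t = norm u}.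

Definition Te tau X (i : nat) : hyperterm tau X :=
  exist _ (HE i) (ex_intro _ (HE i) erefl).

Definition Tsym tau X (s : tau) : hyperterm tau X :=
  exist _ (HApp (inl s) [::]) (ex_intro _ (HApp (inl s) [::]) erefl).

(* x in X identified with x(e_1,e_2,...) *)
Definition Tvar tau X (x : X) : hyperterm tau X :=
  exist _ (HApp (inr x) [::]) (ex_intro _ (HApp (inr x) [::]) erefl).

Definition Tq tau X (t : hyperterm tau X) (l : seq (hyperterm tau X)) : hyperterm tau X :=
  let u := subst (map (@proj1_sig _ _) l) (proj1_sig t) in
  exist _ (norm u) (ex_intro _ u erefl).

Definition clone_hom tau X (A : tAlgebra tau) (alpha : hyperterm tau X -> FCar A) : Prop :=
  [/\ forall i, alpha (@Te tau X i) = @Fe tau A i,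
      forall s, alpha (@Tsym tau X s) = top A s &
      forall t l, alpha (Tq t l) = Fq (alpha t) (map alpha l)].

Definition weak_hom tau X (A : tAlgebra tau) (alpha : hyperterm tau X -> FCar A) : Prop :=
  clone_hom alpha /\ forall x, exists c : tcar A, alpha (@Tvar tau X x) = (fun _ => c).

Definition strong_hom tau X (A : tAlgebra tau) (alpha : hyperterm tau X -> FCar A) : Prop :=
  clone_hom alpha /\ forall x, semiconstant (alpha (@Tvar tau X x)).

(* Main.v *)
Require Import Defs.
From mathcomp Require Import all_boot.
From Stdlib Require Import FunctionalExtensionality ProofIrrelevance.
Set Implicit Arguments. Unset Strict Implicit.

Fixpoint hind (tau X : Type) (P : hterm tau X -> Prop) (H1 : forall i, P (HE i))
  (H2 : forall w l, foldr (fun t acc => P t /\ acc) True l -> P (HApp w l))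
  (t : hterm tau X) : P t :=
  match t with
  | HE i => H1 i
  | HApp w l => H2 w l ((fix F (l : seq (hterm tau X)) :
        foldr (fun t acc => P t /\ acc) True l :=
        match l with [::] => I | x :: l' => conj (hind H1 H2 x) (F l') end) l)
  end.

Lemma fold_map (T U : Type) (f g : T -> U) l :
  foldr (fun t acc => f t = g t /\ acc) True l -> map f l = map g l.
Proof. elim: l => //= x l IH [-> H]; by rewrite IH. Qed.

Lemma fold_imp (T : Type) (P Q : T -> Prop) l :
  foldr (fun t acc => P t /\ acc) True l -> (forall t, P t -> Q t) ->
  foldr (fun t acc => Q t /\ acc) True l.
Proof. move=> H HPQ; elim: l H => //= x l IH [Hx Hl]; split; auto. Qed.

Lemma trc_eq (A : Type) (P : (nat -> A) -> Prop) (a b : trc P) :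
  proj1_sig a = proj1_sig b -> a = b.
Proof.
case: a => a pa; case: b => b pb /= E; subst; f_equal; apply: proof_irrelevance.
Qed.

Lemma hyp_eq (tau X : Type) (a b : hyperterm tau X) :
  proj1_sig a = proj1_sig b -> a = b.
Proof.
case: a => a pa; case: b => b pb /= E; subst; f_equal; apply: proof_irrelevance.
Qed.

Fixpoint ev tau X (A : tAlgebra tau) (g : tau + X -> FCar A) (t : hterm tau X) : FCar A :=
  match t with
  | HE i => @Fe tau A i
  | HApp w l => Fq (g w) (map (ev g) l)
  end.

Lemma nth_map' (T U : Type) (f : T -> U) x s i : nth (f x) (map f s) i = f (nth x s i).
Proof. elim: s i => [|y s IH] [|i] //=. Qed.

Lemma upd_upd (A : Type) (r : nat -> A) L M :
  upd (upd r L) M = upd r (M ++ drop (size M) L).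
Proof.
apply: functional_extensionality => i; rewrite /upd nth_cat.
case: ltnP => Hi; first by apply: set_nth_default.
by rewrite (nth_default _ Hi) nth_drop subnKC.
Qed.

Lemma upd_rcons (A : Type) (r : nat -> A) M :
  upd r (M ++ [:: r (size M)]) = upd r M.
Proof.
apply: functional_extensionality => i; rewrite /upd nth_cat.
case: ltnP => Hi //; rewrite (nth_default _ Hi).
case E: (i - size M) => [|k] /=; last by rewrite nth_nil.
by have -> : i = size M by apply/eqP; rewrite eqn_leq Hi -subn_eq0 E.
Qed.

Lemma isE_eq tau X k (x : hterm tau X) : is_E k x -> x = HE k.
Proof. by case: x => //= j /eqP ->. Qed.

Lemma trimr_upd tau X (A : Type) (r : nat -> A) (f : hterm tau X -> A) :
  (forall k, f (HE k) = r k) ->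
  forall s, upd r (map f (rev (trimr s))) = upd r (map f (rev s)).
Proof.
move=> Hf; elim => [|x s IH] //=.
case E: (is_E (size s) x) => //.
rewrite IH rev_cons -cats1 map_cat (isE_eq E) /= Hf.
by rewrite -(size_rev s) -(size_map f (rev s)) upd_rcons.
Qed.

Lemma ev_norm tau X (A : tAlgebra tau) (g : tau + X -> FCar A) t :
  ev g (norm t) = ev g t.
Proof.
elim/hind: t => [i|w l IH] //=.
apply: functional_extensionality => r; rewrite /Fq; congr (g w _); apply: trc_eq => /=.
rewrite /strip -!map_comp.
rewrite (trimr_upd (f := (fun psi => psi r) \o ev g)) // revK.
congr upd; rewrite -map_comp; apply: fold_map; apply: (fold_imp IH) => t /= ->; done.
Qed.

Lemma ev_subst tau X (A : tAlgebra tau) (g : tau + X -> FCar A) L t r :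
  ev g (subst L t) r =
  ev g t (exist _ (upd (proj1_sig r) (map (fun u => ev g u r) L)) (upd_in r _)).
Proof.
elim/hind: t r => [i|w l IH] r /=.
  by rewrite /Fe /upd /= (nth_map' (fun u => ev g u r) (HE i)).
rewrite /Fq; congr (g w _); apply: trc_eq => /=.
rewrite upd_upd -!map_comp map_cat -!map_comp size_map map_drop.
congr (upd _ (_ ++ _)).
apply: fold_map; apply: (fold_imp IH) => t /= ->; done.
Qed.

Lemma trimr_trimr tau X (s : seq (hterm tau X)) : trimr (trimr s) = trimr s.
Proof. elim: s => //= x s IH; case E: (is_E _ x) => //=; by rewrite E. Qed.

Lemma map_trimr tau X (s : seq (hterm tau X)) :
  map (@norm _ _) (trimr s) = trimr (map (@norm _ _) s).
Proof.
elim: s => //= x s IH; rewrite size_map.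
have -> : is_E (size s) (norm x) = is_E (size s) x by case: x.
by case: (is_E _ x).
Qed.

Lemma norm_idem tau X (t : hterm tau X) : norm (norm t) = norm t.
Proof.
elim/hind: t => [i|w l IH] //=; congr HApp.
rewrite /strip -map_rev revK map_trimr map_rev.
have -> : map (@norm _ _) (map (@norm _ _) l) = map (@norm _ _) l.
  rewrite -map_comp; apply: fold_map; exact: IH.
by rewrite trimr_trimr.
Qed.

Definition atom tau X (w : tau + X) : hyperterm tau X :=
  match w with inl s => Tsym X s | inr x => Tvar tau x end.

Definition Nh tau X (u : hterm tau X) : hyperterm tau X :=
  exist _ (norm u) (ex_intro _ u erefl).

Lemma hom_ev tau X (A : tAlgebra tau) (b : hyperterm tau X -> FCar A) :
  clone_hom b -> forall u, b (Nh u) = ev (fun w => b (atom w)) u.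
Proof.
case=> He Hs Hq; elim/hind => [i|w l IH]; first exact: He.
have -> : Nh (HApp w l) = Tq (atom w) (map (@Nh _ _) l).
  apply: hyp_eq => /=; rewrite -map_comp.
  case: w => [s|x] /=; rewrite drop0; congr HApp; congr strip;
  rewrite -map_comp; apply: fold_map; elim: l {IH} => //= x0 l Hl ; split => //;
  exact: esym (norm_idem _).
rewrite Hq /=; congr Fq; rewrite -map_comp; apply: fold_map; exact: IH.
Qed.

Lemma hom_val tau X (A : tAlgebra tau) (b : hyperterm tau X -> FCar A) :
  clone_hom b -> forall t, b t = ev (fun w => b (atom w)) (proj1_sig t).
Proof.
move=> Hb [v [u e]]; subst v => /=; rewrite ev_norm; exact: hom_ev.
Qed.

Lemma fd_sym A (r s : nat -> A) : fin_diff r s -> fin_diff s r.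
Proof. by case=> N H; exists N => i Hi; rewrite H. Qed.

Lemma fd_trans A (r s t : nat -> A) : fin_diff r s -> fin_diff s t -> fin_diff r t.
Proof.
case=> N H [M H']; exists (maxn N M) => i Hi.
rewrite H ?H' //; [exact: leq_trans (leq_maxr _ _) Hi | exact: leq_trans (leq_maxl _ _) Hi].
Qed.

Theorem mainTheorem2 (tau X : Type) (A : tAlgebra tau) (u1 u2 : hyperterm tau X) :
  (forall alpha : hyperterm tau X -> FCar A, weak_hom alpha -> alpha u1 = alpha u2) <->
  (forall beta : hyperterm tau X -> FCar A, strong_hom beta -> beta u1 = beta u2).
Proof.
split; last first.
  move=> H a [Ha Hc]; apply: H; split => // x r s _; by case: (Hc x) => c ->.
move=> H b [Hb Hsc].
apply: functional_extensionality => r0.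
pose g' (w : tau + X) : FCar A :=
  match w with inl s => top A s | inr x => fun _ => b (Tvar tau x) r0 end.
pose a (t : hyperterm tau X) := ev g' (proj1_sig t).
have key : forall t r, fin_diff (proj1_sig r0) (proj1_sig r) ->
    ev (fun w => b (atom w)) t r = ev g' t r.
  elim/hind => [i|w l IH] r Hr //=.
  rewrite /Fq.
  have -> : map (fun psi => psi r) (map (ev (fun w => b (atom w))) l) =
            map (fun psi => psi r) (map (ev g') l).
    rewrite -!map_comp; apply: fold_map; apply: (fold_imp IH) => t /= Ht; exact: Ht.
  case: w => [s|x] /=; first by case: Hb => _ -> _.
  apply: Hsc => /=; apply: fd_trans (fd_sym (fin_diff_upd _ _)) _; exact: fd_sym.
have Ha : weak_hom a.
  split; last by move=> x; exists (b (Tvar tau x) r0); rewrite /a /=;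
    apply: functional_extensionality => r; rewrite /Fq.
  split.
  - by [].
  - move=> s; rewrite /a /=; apply: functional_extensionality => r; rewrite /Fq.
    f_equal; apply: trc_eq => /=; apply: functional_extensionality => i; by rewrite /upd nth_nil.
  - move=> t l; rewrite /a /= ev_norm; apply: functional_extensionality => r.
    rewrite ev_subst /Fq; f_equal; apply: trc_eq => /=.
    by rewrite -!map_comp.
have E := H a Ha.
have fd0 : fin_diff (proj1_sig r0) (proj1_sig r0) by exists 0.
rewrite !(hom_val Hb) !key //.
by move/(congr1 (fun f => f r0)): E.
Qed.
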